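(* Let $m \geq 2$ be an integer, let $k \in \{1, 2, \ldots, m-1\}$, and let $p \in \left(\frac{k}{m}, \frac{k+1}{m}\right]$. Then $$\mathbb{P}_{X \sim B(m,p)}\big[X \geq mp\big] \;\geq\; \mathbb{P}_{X \sim B(m,\frac{k}{m})}\big[X \geq k+1\big].$$
   Context: $B(m,p)$ denotes the binomial distribution with $m$ trials and success probability $p$: $\mathbb{P}[X=j]=\binom{m}{j}p^j(1-p)^{m-j}$ for $j=0,\dots,m$; its mean is $mp$. *)

(* Defs.v *)
From HB Require Import structures.
From mathcomp Require Import all_boot all_order all_algebra.
Set Implicit Arguments. Unset Strict Implicit. Unset Printing Implicit Defensive.
Import Order.TTheory GRing.Theory Num.Theory.
Local Open Scope ring_scope.

Definition binom_pmf (R : realFieldType) (m : nat) (p : R) (j : nat) : R :=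
  ('C(m, j))%:R * p ^+ j * (1 - p) ^+ (m - j).

Definition binom_prob (R : realFieldType) (m : nat) (p : R) (A : pred nat) : R :=
  \sum_(j < m.+1 | A j) binom_pmf m p j.

(* Main.v *)
Require Import Defs.
From mathcomp Require Import all_boot all_order all_algebra.
From mathcomp Require Import ring lra zify.
Import Order.TTheory GRing.Theory Num.Theory.
Local Open Scope ring_scope.

Section Aux.
Variable R : realFieldType.

Definition F (m j : nat) (p : R) : R :=
  \sum_(i < m.+1) (if (j <= i)%N then binom_pmf m p i else 0).

Lemma pmf_big m (p : R) i : (m < i)%N -> binom_pmf m p i = 0.
Proof. by move=> h; rewrite /binom_pmf bin_small // mul0r mul0r. Qed.

Lemma pmf_ge0 m (p : R) i : 0 <= p -> p <= 1 -> 0 <= binom_pmf m p i.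
Proof.
move=> h0 h1; rewrite /binom_pmf.
by rewrite !mulr_ge0 ?exprn_ge0 // ?subr_ge0.
Qed.

Lemma pmfS m (p : R) i :
  binom_pmf m.+1 p i.+1 = p * binom_pmf m p i + (1 - p) * binom_pmf m p i.+1.
Proof.
rewrite /binom_pmf binS natrD subSS.
case: (ltnP i m) => him.
  have -> : (m - i = (m - i.+1).+1)%N by lia.
  rewrite !exprS; ring.
rewrite (@bin_small m i.+1) ?ltnS // mul0r mul0r mulr0 add0r exprS; ring.
Qed.

Lemma pmfS0 m (p : R) : binom_pmf m.+1 p 0 = (1 - p) * binom_pmf m p 0.
Proof. rewrite /binom_pmf !subn0 !bin0 !expr0 exprS; ring. Qed.

Lemma F0 m (p : R) : F m 0 p = 1.
Proof.
rewrite /F -[RHS](expr1n R m) -[1 in RHS](subrK p) exprDn.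
apply: eq_bigr => i _ /=; rewrite /binom_pmf -mulr_natl; ring.
Qed.

Lemma F_rec m j (p : R) : F m.+1 j.+1 p = p * F m j p + (1 - p) * F m j.+1 p.
Proof.
rewrite /F big_ord_recl ltn0 add0r.
rewrite [in X in _ = _ + _ * X](big_ord_recl m) ltn0 add0r.
have -> : \sum_(i < m.+1) (if (j < lift ord0 i)%N then binom_pmf m.+1 p (lift ord0 i) else 0)
  = \sum_(i < m.+1) (p * (if (j <= i)%N then binom_pmf m p i else 0)
       + (1 - p) * (if (j < i.+1)%N then binom_pmf m p i.+1 else 0)).
  apply: eq_bigr => i _; rewrite lift0 ltnS.
  by case: ifP => _; rewrite ?pmfS ?mulr0 ?addr0.
rewrite big_split -!mulr_sumr; congr (_ + _ * _).
rewrite (big_ord_recr m) pmf_big ?ltnSn // if_same Monoid.mulm1.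
by apply: eq_bigr => i _; rewrite lift0.
Qed.

Lemma F_anti m j (p : R) : 0 <= p -> p <= 1 -> F m j.+1 p <= F m j p.
Proof.
move=> h0 h1; rewrite /F; apply: ler_sum => i _.
case: ifP => h; first by rewrite (ltnW h).
by case: ifP => _ //; apply: pmf_ge0.
Qed.

Lemma F_mono (p q : R) : 0 <= p -> p <= q -> q <= 1 ->
  forall m j, F m j p <= F m j q.
Proof.
move=> h0 hpq h1; elim=> [|m IH] j.
  rewrite /F !big_ord_recl !big_ord0 /binom_pmf !expr0; by [].
case: j => [|j]; first by rewrite !F0.
rewrite !F_rec.
have a1 := IH j; have b1 := IH j.+1.
have c1 := @F_anti m j p h0 (le_trans hpq h1).
have hq0 : 0 <= q by apply: le_trans hpq.
have e1 : 0 <= q * (F m j q - F m j p) by rewrite mulr_ge0 // subr_ge0.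
have e2 : 0 <= (1 - q) * (F m j.+1 q - F m j.+1 p) by rewrite mulr_ge0 // subr_ge0.
have e3 : 0 <= (q - p) * (F m j p - F m j.+1 p) by rewrite mulr_ge0 // subr_ge0.
rewrite -subr_ge0.
have -> : q * F m j q + (1 - q) * F m j.+1 q - (p * F m j p + (1 - p) * F m j.+1 p)
  = q * (F m j q - F m j p) + (1 - q) * (F m j.+1 q - F m j.+1 p)
    + (q - p) * (F m j p - F m j.+1 p) by ring.
by rewrite !addr_ge0.
Qed.

End Aux.

Theorem lemma1 (R : realFieldType) (m k : nat) (p : R) :
  (2 <= m)%N -> (1 <= k)%N -> (k <= m - 1)%N ->
  k%:R / m%:R < p -> p <= k.+1%:R / m%:R ->
  binom_prob m (k%:R / m%:R) (fun j : nat => k.+1%:R <= (j%:R : R))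
    <= binom_prob m p (fun j : nat => m%:R * p <= (j%:R : R)).
Proof.
move=> hm hk hkm hlo hhi.
have m0 : (0 < m%:R :> R) by rewrite ltr0n (leq_trans _ hm).
have hkp : k%:R < m%:R * p by rewrite mulrC -ltr_pdivrMr.
have hpk : m%:R * p <= k.+1%:R by rewrite mulrC -ler_pdivlMr.
have q0 : 0 <= k%:R / m%:R :> R by rewrite divr_ge0 ?ler0n ?ltW.
have p1 : p <= 1.
  apply: (le_trans hhi); rewrite ler_pdivrMr // mul1r ler_nat; lia.
have := @F_mono R _ _ q0 (ltW hlo) p1 m k.+1.
rewrite /F /binom_prob => H; rewrite big_mkcond [in X in _ <= X]big_mkcond.
have E1 : forall (q : R) (i : nat), (if k.+1%:R <= (i%:R : R) then binom_pmf m q i else 0)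
   = (if (k < i)%N then binom_pmf m q i else 0).
  by move=> q i; rewrite ler_nat.
have E2 : forall i : nat, (if m%:R * p <= (i%:R : R) then binom_pmf m p i else 0)
   = (if (k < i)%N then binom_pmf m p i else 0).
  move=> i; congr (if _ then _ else _); apply/idP/idP => h.
    by rewrite -(ltr_nat R); apply: lt_le_trans h.
  by apply: (le_trans hpk); rewrite ler_nat.
under eq_bigr => i _ do rewrite E1.
under [in X in _ <= X]eq_bigr => i _ do rewrite E2.
exact: H.
Qed.
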